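(* Let $\{\nu_t\}_{t\ge0}\subset\mathcal{P}(\mathbb{T})$ be a weakly continuous $\rhd$-convolution semigroup with $\nu_0=\delta_1$ and $\nu_1=\delta_{e^{i\alpha}}$ for some $\alpha\in\mathbb{R}$. Let $B_2:\mathbb{D}\to\mathbb{C}$ be an analytic function with $\operatorname{Re}B_2\le0$ such that $$\frac{d}{dt}\eta_{\nu_t}(z)=\eta_{\nu_t}(z)\,B_2(\eta_{\nu_t}(z))\qquad\text{for all } t\ge0,\ z\in\mathbb{D}.$$ Then $B_2$ is a constant function with value in $i\mathbb{R}$.
   Context: $\mathbb{T}$ is the unit circle, $\mathbb{D}$ the open unit disc, $\mathcal{P}(\mathbb{T})$ the Borel probability measures on $\mathbb{T}$, and $\delta_a$ the Dirac mass at $a$. For $\nu\in\mathcal{P}(\mathbb{T})$ let $\psi_\nu(z)=\int\frac{z\zeta}{1-z\zeta}d\nu(\zeta)$ and $\eta_\nu=\psi_\nu/(1+\psi_\nu)$ on $\mathbb{D}$; $\eta_\nu$ determines $\nu$. The multiplicative monotone convolution $\nu_1\rhd\nu_2$ is defined by $\eta_{\nu_1\rhd\nu_2}=\eta_{\nu_1}\circ\eta_{\nu_2}$. A weakly continuous $\rhd$-convolution semigroup is a family $\{\nu_t\}_{t\ge0}$ with $\nu_{s+t}=\nu_s\rhd\nu_t$ for all $s,t\ge0$ and $t\mapsto\nu_t$ weakly continuous. *)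

(* Defs.v *)
From HB Require Import structures.
From mathcomp Require Import all_boot all_order all_algebra.
From mathcomp Require Import all_classical all_reals all_analysis.
From mathcomp Require Import complex.
Import Order.TTheory GRing.Theory Num.Theory.
Import numFieldNormedType.Exports.

Set Implicit Arguments.
Unset Strict Implicit.
Unset Printing Implicit Defensive.

Local Open Scope classical_set_scope.
Local Open Scope ring_scope.

(* The complex plane C over a real type R, with its canonical normed /
   topological structure (the ^o copy gives C the structure of a normed
   module over itself, i.e. complex differentiability). *)
Definition CC (R : realType) := (R[i])^o.

(* Borel
   probability measures on the unit circle T are represented as probability
   measures on the Borel sets of R*R which give full mass to T. *)
Definition toC (R : realType) (p : R * R) : CC R := Complex p.1 p.2.

Definition circle (R : realType) : set (R * R) := [set p | p.1 ^+ 2 + p.2 ^+ 2 = 1].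
Definition disc (R : realType) : set (CC R) := [set z | `|z| < 1].

Definition prob_on_circle (R : realType) (nu : probability (R * R)%type R) : Prop :=
  nu (~` @circle R) = 0%E.

Definition Cintegral (R : realType) (nu : probability (R * R)%type R)
    (f : R * R -> CC R) : CC R :=
  Complex (Rintegral nu setT (fun p => complex.Re (f p)))
          (Rintegral nu setT (fun p => complex.Im (f p))).

Definition psiT (R : realType) (nu : probability (R * R)%type R) (z : CC R) : CC R :=
  Cintegral nu (fun p => z * toC p / (1 - z * toC p)).

Definition etaT (R : realType) (nu : probability (R * R)%type R) (z : CC R) : CC R :=
  psiT nu z / (1 + psiT nu z).

(* nu = nu1 |> nu2  (multiplicative monotone convolution):
   eta_nu = eta_nu1 o eta_nu2 on the unit disc *)
Definition is_mmconv (R : realType) (nu1 nu2 nu : probability (R * R)%type R) : Prop :=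
  forall z, @disc R z -> etaT nu z = etaT nu1 (etaT nu2 z).

(* weak continuity of t |-> nu_t on [0, +oo): for every bounded continuous
   real function f (on the plane; equivalently on T, by Tietze extension),
   t |-> \int f d nu_t is continuous on [0, +oo). *)
Definition weakly_continuous (R : realType) (nu : R -> probability (R * R)%type R) : Prop :=
  forall f : R * R -> R, continuous f -> (exists M : R, forall p, `|f p| <= M) ->
    {within `[0, +oo[, continuous (fun t => Rintegral (nu t) setT f)}.

Definition mm_semigroup (R : realType) (nu : R -> probability (R * R)%type R) : Prop :=
  (forall t, 0 <= t -> prob_on_circle (nu t)) /\
  (forall s t, 0 <= s -> 0 <= t -> is_mmconv (nu s) (nu t) (nu (s + t))) /\
  weakly_continuous nu.

Definition has_tderiv (R : realType) (F : R -> CC R) (t : R) (l : CC R) : Prop :=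
  (fun h : R => (F (t + h) - F t) / (h%:C)%C)
    @ within (fun h : R => h != 0 /\ 0 <= t + h) (nbhs 0) --> l.

Definition analytic_on_disc (R : realType) (f : CC R -> CC R) : Prop :=
  forall z, @disc R z -> derivable f z 1.

(* Main.v *)
Require Import Defs.
From HB Require Import structures.
From mathcomp Require Import all_boot all_order all_algebra.
From mathcomp Require Import all_classical all_reals all_analysis.
From mathcomp Require Import complex.
From mathcomp Require Import ring lra.
Import Order.TTheory GRing.Theory Num.Theory.
Import numFieldNormedType.Exports.
Local Open Scope classical_set_scope.
Local Open Scope ring_scope.

Section All.
Variable R : realType.
Implicit Types (w : R[i]).

Lemma absRe_le w : (`|complex.Re w|%:C)%C <= `|w|.
Proof. exact: normc_ge_Re. Qed.

Lemma absIm_le w : (`|complex.Im w|%:C)%C <= `|w|.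
Proof.
have := normc_ge_Re (w * 'i%C).
rewrite ReiNIm normrN normrM.
have -> : `|'i%C| = 1 :> R[i].
  by rewrite normc_def /= expr0n /= expr1n add0r sqrtr1.
by rewrite mulr1.
Qed.

Lemma small_parts w (e : R) : `|w| < (e%:C)%C ->
  `|complex.Re w| < e /\ `|complex.Im w| < e.
Proof.
move=> H; split.
  by rewrite -ltcR; exact: le_lt_trans (absRe_le w) H.
by rewrite -ltcR; exact: le_lt_trans (absIm_le w) H.
Qed.

Lemma tderiv_eps (F : R -> CC R) t l : has_tderiv F t l ->
  forall e : R, 0 < e -> exists2 d : R, 0 < d & forall h : R, h != 0 -> 0 <= t + h ->
   `|h| < d ->
   `|complex.Re ((F (t + h) - F t) / (h%:C)%C - l)| < e /\
   `|complex.Im ((F (t + h) - F t) / (h%:C)%C - l)| < e.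
Proof.
move=> H e e0.
have /cvgrPdist_lt/(_ (e%:C)%C) : has_tderiv F t l by [].
rewrite ltcR => /(_ e0).
rewrite near_withinE => /nbhs_normP [d /= d0 Hd].
exists d => // h h0 th hd.
have := Hd h; rewrite /ball_ /= sub0r normrN => /(_ hd (conj h0 th)).
by rewrite -normrN opprB => /small_parts.
Qed.
Lemma key_ineq (x0 y0 a b l1 l2 h e e' : R) :
 let K := 2 * `|x0| + 2 * `|y0| + (`|l1| + 1) ^+ 2 + (`|l2| + 1) ^+ 2 + 1 in
 `|a - l1| < e' -> `|b - l2| < e' -> e' <= 1 -> e' <= e / K -> `|h| <= e / K -> 0 < e ->
 `|(x0 + h * a) ^+ 2 + (y0 + h * b) ^+ 2 - (x0 ^+ 2 + y0 ^+ 2) - 2 * (x0 * l1 + y0 * l2) * h|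
   <= e * `|h|.
Proof.
move=> K ha hb e'1 e'K hK e0.
have -> : (x0 + h * a) ^+ 2 + (y0 + h * b) ^+ 2 - (x0 ^+ 2 + y0 ^+ 2) - 2 * (x0 * l1 + y0 * l2) * h
   = h * (2 * x0 * (a - l1) + 2 * y0 * (b - l2) + h * (a ^+ 2 + b ^+ 2)) by ring.
rewrite normrM mulrC ler_wpM2r //.
have K0 : 0 < K by rewrite /K; have := normr_ge0 x0; have := normr_ge0 y0;
  have := sqr_ge0 (`|l1| + 1); have := sqr_ge0 (`|l2| + 1); lra.
have Ha : a ^+ 2 <= (`|l1| + 1) ^+ 2.
  rewrite -real_normK ?num_real //; apply: lerXn2r; rewrite ?nnegrE ?addr_ge0 //.
  have : `|a| <= `|a - l1| + `|l1| by rewrite -{1}(subrK l1 a) ler_normD.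
  lra.
have Hb : b ^+ 2 <= (`|l2| + 1) ^+ 2.
  rewrite -real_normK ?num_real //; apply: lerXn2r; rewrite ?nnegrE ?addr_ge0 //.
  have : `|b| <= `|b - l2| + `|l2| by rewrite -{1}(subrK l2 b) ler_normD.
  lra.
apply: le_trans (ler_normD _ _) _.
apply: le_trans (lerD (ler_normD _ _) (lexx _)) _.
rewrite !normrM (ger0_norm (_ : 0 <= 2)) // (ger0_norm (_ : 0 <= a ^+ 2 + b ^+ 2));
  last by rewrite addr_ge0 ?sqr_ge0.
have eK : e / K * K = e by rewrite mulfVK // gt_eqF.
have h1 : `|x0| * `|a - l1| <= `|x0| * (e / K) by rewrite ler_wpM2l // ltW // (lt_le_trans ha).
have h2 : `|y0| * `|b - l2| <= `|y0| * (e / K) by rewrite ler_wpM2l // ltW // (lt_le_trans hb).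
have h3 : `|h| * (a ^+ 2 + b ^+ 2) <= (e / K) * ((`|l1| + 1) ^+ 2 + (`|l2| + 1) ^+ 2).
  apply: ler_pM => //; first by rewrite addr_ge0 ?sqr_ge0.
  exact: lerD.
have eK0 : 0 <= e / K by rewrite divr_ge0 // ltW.
move: eK; rewrite /K => eK.
have := mulr_ge0 eK0 ler01.
nra.
Qed.

Definition rr (F : R -> CC R) (s : R) := complex.Re (F s) ^+ 2 + complex.Im (F s) ^+ 2.

Lemma tderiv_r (F : R -> CC R) t l : has_tderiv F t l ->
 forall e : R, 0 < e -> exists2 d : R, 0 < d & forall h : R, h != 0 -> 0 <= t + h -> `|h| < d ->
  `|rr F (t + h) - rr F t - 2 * (complex.Re (F t) * complex.Re l + complex.Im (F t) * complex.Im l) * h|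
   <= e * `|h|.
Proof.
move=> H e e0.
set x0 := complex.Re (F t); set y0 := complex.Im (F t).
set l1 := complex.Re l; set l2 := complex.Im l.
pose K := 2 * `|x0| + 2 * `|y0| + (`|l1| + 1) ^+ 2 + (`|l2| + 1) ^+ 2 + 1.
have K0 : 0 < K by rewrite /K; have := normr_ge0 x0; have := normr_ge0 y0;
  have := sqr_ge0 (`|l1| + 1); have := sqr_ge0 (`|l2| + 1); lra.
have eK0 : 0 < e / K by rewrite divr_gt0.
pose e' := Num.min 1 (e / K).
have e'0 : 0 < e' by rewrite /e' lt_min ltr01 eK0.
have [d d0 Hd] := tderiv_eps _ _ _ H _ e'0.
exists (Num.min d (e / K)); first by rewrite lt_min d0 eK0.
move=> h h0 th; rewrite lt_min => /andP[hd hK].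
have [ha hb] := Hd h h0 th hd.
set q := (F (t + h) - F t) / (h%:C)%C in ha hb.
have eF : F (t + h) = F t + (h%:C)%C * q.
  rewrite /q mulrC divfK; first by rewrite [F t + _]addrC subrK.
  by apply/eqP => -[] /eqP; rewrite (negbTE h0).
rewrite /rr eF.
have ReA : forall (x y : R[i]) (h : R), complex.Re (x + (h%:C)%C * y) = complex.Re x + h * complex.Re y.
  by move=> [? ?] [? ?] ? /=; rewrite mul0r subr0.
have ImA : forall (x y : R[i]) (h : R), complex.Im (x + (h%:C)%C * y) = complex.Im x + h * complex.Im y.
  by move=> [? ?] [? ?] ? /=; rewrite mul0r addr0.
have ReB : forall (x y : R[i]), complex.Re (x - y) = complex.Re x - complex.Re y by move=> [? ?] [? ?].
have ImB : forall (x y : R[i]), complex.Im (x - y) = complex.Im x - complex.Im y by move=> [? ?] [? ?].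
rewrite ReA ImA.
apply: (@key_ineq _ _ _ _ _ _ _ _ e') => //.
- by move: ha; rewrite ReB.
- by move: hb; rewrite ImB.
- by rewrite /e' ge_min lexx.
- by rewrite /e' ge_min lexx orbT.
- exact: ltW.
Qed.

Lemma compare (r : R -> R) (c t0 t1 eps : R) :
 t0 <= t1 -> 0 < eps -> r t0 + eps * (t1 - t0) < c ->
 (forall t, t0 <= t <= t1 -> r t < c -> forall e, 0 < e ->
    exists2 d, 0 < d & forall h, 0 < h < d -> r (t+h) <= r t + e*h) ->
 (forall t, t0 < t <= t1 -> forall e, 0 < e ->
    exists2 d, 0 < d & forall s, t0 <= s < t -> t - d < s -> r t <= r s + e) ->
 forall t, t0 <= t <= t1 -> r t <= r t0 + eps * (t - t0).
Proof.
move=> t01 eps0 hc H1 H2 t /andP[t0t tt1].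
rewrite leNgt; apply/negP => Hlt.
pose g s := r t0 + eps * (s - t0).
have gmono : forall a b, a <= b -> g a <= g b.
  by move=> a b ab; rewrite /g lerD2l ler_pM2l // lerD2r.
pose S := [set s | t0 <= s <= t1 /\ g s < r s].
have St : S t by split; [apply/andP|].
have lbS : lbound S t0 by move=> s [/andP[]].
have hlS : has_lbound S by exists t0.
have hiS : has_inf S by split; [exists t|].
set m := inf S.
have t0m : t0 <= m by apply: lb_le_inf => //; exists t.
have mt : m <= t by apply: ge_inf.
have rm : r m <= g m.
  case: (ltrP t0 m) => [t0m'|mt0].
    rewrite leNgt; apply/negP => hm.
    have e0 : 0 < (r m - g m) / 2 by rewrite divr_gt0 // subr_gt0.
    have hm' : t0 < m <= t1 by rewrite t0m' (le_trans mt tt1).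
    have [d d0 Hd] := H2 m hm' _ e0.
    pose s := Num.max t0 (m - d / 2).
    have d20 : 0 < d / 2 by rewrite divr_gt0.
    have sm : s < m by rewrite /s gt_max t0m' ltrBlDr ltrDl.
    have t0s : t0 <= s by rewrite /s le_max lexx.
    have ms : m - d < s.
      rewrite /s lt_max; apply/orP; right.
      by rewrite ltrD2l ltrN2 ltr_pdivrMr // ltr_pMr // ltr1n.
    have nS : ~ S s.
      by move=> Ss; have := ge_inf hlS Ss; rewrite -/m leNgt sm.
    have rs : r s <= g s.
      rewrite leNgt; apply/negP => hs; apply: nS; split => //.
      by rewrite t0s (le_trans (ltW sm) (le_trans mt tt1)).
    have := Hd s (_ : t0 <= s < m) ms.
    rewrite t0s sm => /(_ isT) hh.
    have : r m <= g m + (r m - g m) / 2.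
      by apply: le_trans hh _; rewrite lerD2r (le_trans rs) // gmono // ltW.
    by rewrite -subr_ge0 => hh2; move: hm; rewrite -subr_gt0; lra.
  have -> : m = t0 by apply/eqP; rewrite eq_le mt0 t0m.
  by rewrite /g subrr mulr0 addr0.
have nSm : ~ S m by move=> [_]; rewrite ltNge rm.
have rmc : r m < c.
  apply: le_lt_trans rm _; apply: le_lt_trans hc.
  by rewrite /g lerD2l ler_pM2l // lerD2r (le_trans mt).
have e20 : 0 < eps / 2 by rewrite divr_gt0.
have tm1 : t0 <= m <= t1 by rewrite t0m (le_trans mt tt1).
have [d d0 Hd] := H1 m tm1 rmc _ e20.
have [e' Se' e'm] := inf_adherent d0 hiS.
have me' : m <= e' by apply: ge_inf.
have me'' : m < e'.
  by rewrite lt_neqAle me' andbT; apply/eqP => E; apply: nSm; rewrite E.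
have hd : 0 < e' - m < d.
  by rewrite subr_gt0 me'' /= ltrBlDl.
have := Hd _ hd.
rewrite addrC subrK => he.
case: Se' => _; rewrite ltNge => /negP; apply.
apply: le_trans he _.
apply: le_trans (lerD rm (lexx _)) _.
rewrite /g -addrA lerD2l.
have : 0 < e' - m by rewrite subr_gt0.
rewrite -/m => hp. have := mulr_gt0 eps0 hp. lra.
Qed.


Lemma closed0 : closed [set (0:R)].
Proof. apply: accessible_closed_set1. apply: hausdorff_accessible. exact: Rhausdorff. Qed.

Lemma measurable_inv : measurable_fun setT (fun x : R => x^-1).
Proof.
rewrite -(setUv [set (0:R)]).
apply/measurable_funU.
- exact: measurable_realfun.closed_measurable closed0.
- by apply: measurableC; exact: measurable_realfun.closed_measurable closed0.
split; first exact: measurable_fun_set1.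
apply: measurable_realfun.open_continuous_measurable_fun; first by rewrite openC; exact: closed0.
move=> x; rewrite inE /= => /eqP x0.
exact: inv_continuous.
Qed.

Definition cmeas (g : R * R -> R[i]) :=
  measurable_fun setT (fun p => complex.Re (g p)) /\
  measurable_fun setT (fun p => complex.Im (g p)).

Lemma cmeas_cst c : cmeas (fun _ => c).
Proof. by split; exact: measurable_cst. Qed.

Lemma cmeas_toC : cmeas (@toC R).
Proof. by split; [exact: measurable_fst | exact: measurable_snd]. Qed.

Lemma cmeas_add f g : cmeas f -> cmeas g -> cmeas (fun p => f p + g p).
Proof.
move=> [f1 f2] [g1 g2]; split.
  have -> : (fun p => complex.Re (f p + g p)) = (fun p => complex.Re (f p)) \+ (fun p => complex.Re (g p)).
    by apply: funext => p /=; case: (f p) => ? ?; case: (g p) => ? ? /=.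
  exact: measurable_realfun.measurable_funD.
have -> : (fun p => complex.Im (f p + g p)) = (fun p => complex.Im (f p)) \+ (fun p => complex.Im (g p)).
  by apply: funext => p /=; case: (f p) => ? ?; case: (g p) => ? ? /=.
exact: measurable_realfun.measurable_funD.
Qed.

Lemma cmeas_opp f : cmeas f -> cmeas (fun p => - f p).
Proof.
move=> [f1 f2]; split.
  have -> : (fun p => complex.Re (- f p)) = \- (fun p => complex.Re (f p)).
    by apply: funext => p /=; case: (f p) => ? ? /=.
  exact: measurable_realfun.measurable_funN.
have -> : (fun p => complex.Im (- f p)) = \- (fun p => complex.Im (f p)).
  by apply: funext => p /=; case: (f p) => ? ? /=.
exact: measurable_realfun.measurable_funN.
Qed.

Lemma cmeas_mul f g : cmeas f -> cmeas g -> cmeas (fun p => f p * g p).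
Proof.
move=> [f1 f2] [g1 g2]; split.
  have -> : (fun p => complex.Re (f p * g p)) = ((fun p => complex.Re (f p)) \* (fun p => complex.Re (g p))) \- ((fun p => complex.Im (f p)) \* (fun p => complex.Im (g p))).
    by apply: funext => p /=; case: (f p) => ? ?; case: (g p) => ? ? /=.
  by apply: measurable_realfun.measurable_funB; apply: measurable_realfun.measurable_funM.
have -> : (fun p => complex.Im (f p * g p)) = ((fun p => complex.Re (f p)) \* (fun p => complex.Im (g p))) \+ ((fun p => complex.Im (f p)) \* (fun p => complex.Re (g p))).
  by apply: funext => p /=; case: (f p) => ? ?; case: (g p) => ? ? /=.
by apply: measurable_realfun.measurable_funD; apply: measurable_realfun.measurable_funM.
Qed.

Lemma cmeas_inv f : cmeas f -> cmeas (fun p => (f p)^-1).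
Proof.
move=> [f1 f2].
have mn : measurable_fun setT (fun p => ((complex.Re (f p)) ^+ 2 + (complex.Im (f p)) ^+ 2)^-1).
  apply: (measurableT_comp measurable_inv).
  by apply: measurable_realfun.measurable_funD; apply: measurable_realfun.measurable_funX.
split.
  have -> : (fun p => complex.Re ((f p)^-1)) = (fun p => complex.Re (f p)) \* (fun p => ((complex.Re (f p)) ^+ 2 + (complex.Im (f p)) ^+ 2)^-1).
    by apply: funext => p /=; case: (f p) => ? ? /=.
  exact: measurable_realfun.measurable_funM.
have -> : (fun p => complex.Im ((f p)^-1)) = (\- (fun p => complex.Im (f p))) \* (fun p => ((complex.Re (f p)) ^+ 2 + (complex.Im (f p)) ^+ 2)^-1).
    by apply: funext => p /=; case: (f p) => a b /=; rewrite mulNr.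
by apply: measurable_realfun.measurable_funM => //; exact: measurable_realfun.measurable_funN.
Qed.

Lemma Cint_dirac (nu : probability (R * R)%type R) (a : R * R) (f : R * R -> CC R) :
  (forall A, measurable A -> nu A = \d_a A) -> cmeas f -> Cintegral nu f = f a.
Proof.
move=> H [f1 f2].
rewrite /Cintegral /Rintegral.
rewrite (eq_measure_integral (\d_a)); last by move=> A mA _; exact: H.
rewrite [in X in Complex _ X](eq_measure_integral (\d_a)); last by move=> A mA _; exact: H.
rewrite !integral_dirac //; try by apply/measurable_realfun.measurable_EFinP.
by rewrite diracT !mul1e /=; case: (f a).
Qed.

Lemma pos_real (x : R[i]) : 0 < x -> x = ((complex.Re x)%:C)%C /\ 0 < complex.Re x.
Proof. by case: x => a b; rewrite ltcE /= => /andP[/eqP -> ->]. Qed.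

Lemma deriv_eps (f : CC R -> CC R) a : derivable f a 1 ->
  exists D : CC R, forall e : R, 0 < e -> exists2 d : R, 0 < d &
    forall h : CC R, h != 0 -> `|h| < (d%:C)%C -> `|(f (a + h) - f a) / h - D| < (e%:C)%C.
Proof.
move=> H; exists (lim (h^-1 *: ((f \o shift a) (h *: 1) - f a) @[h --> 0^'])).
move=> e e0.
have := H; move/cvgrPdist_lt/(_ (e%:C)%C); rewrite ltcR => /(_ e0).
rewrite near_withinE => /nbhs_normP [d /= d0 Hd].
have [dE dp] := pos_real _ d0.
exists (complex.Re d) => // h h0 hd.
have := Hd h; rewrite /ball_ /= sub0r normrN. rewrite {1}dE => /(_ hd h0).
rewrite distrC [h%:A + a]addrC. have -> : h%:A = h by rewrite /GRing.scale /= mulr1. by rewrite mulrC.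
Qed.
Lemma normC_real (s : R) : `|(s%:C)%C : R[i]| = ((`|s|)%:C)%C.
Proof. by rewrite normc_def /= expr0n /= addr0 sqrtr_sqr. Qed.

Lemma normC_pos (u : R[i]) : u != 0 ->
  `|u| = ((complex.Re `|u|)%:C)%C /\ 0 < complex.Re `|u|.
Proof. by move=> u0; apply: pos_real; rewrite normr_gt0. Qed.

Lemma dir_eps (f : CC R -> CC R) a D (u : CC R) :
  (forall e : R, 0 < e -> exists2 d : R, 0 < d &
    forall h : CC R, h != 0 -> `|h| < (d%:C)%C -> `|(f (a + h) - f a) / h - D| < (e%:C)%C) ->
  forall e : R, 0 < e -> exists2 d : R, 0 < d & forall s : R, s != 0 -> `|s| < d ->
    `|(f (a + (s%:C)%C * u) - f a) / (s%:C)%C - D * u| < (e%:C)%C.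
Proof.
move=> HD e e0.
have [->|u0] := eqVneq u 0.
  exists 1 => // s _ _; rewrite mulr0 addr0 subrr mul0r sub0r mulr0 oppr0 normr0.
  by rewrite (_ : (0 : R[i]) = (0:R)%:C)%C // ltcR.
have [nuE nu0] := normC_pos _ u0.
set nu := complex.Re `|u| in nuE nu0.
have [d d0 Hd] := HD (e / nu) (divr_gt0 e0 nu0).
exists (d / nu); first exact: divr_gt0.
move=> s s0 sd.
have s0' : (s%:C)%C != 0 :> R[i] by apply/eqP => -[] /eqP; rewrite (negbTE s0).
have h0 : (s%:C)%C * u != 0 by rewrite mulf_neq0.
have hd : `|(s%:C)%C * u| < (d%:C)%C.
  by rewrite normrM normC_real nuE -rmorphM ltcR -ltr_pdivlMr.
have hh := Hd _ h0 hd.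
have -> : (f (a + (s%:C)%C * u) - f a) / (s%:C)%C - D * u
    = u * ((f (a + (s%:C)%C * u) - f a) / ((s%:C)%C * u) - D).
  by field; rewrite s0' u0.
rewrite normrM.
apply: (@lt_le_trans _ _ (`|u| * ((e / nu)%:C)%C)).
  by rewrite ltr_pM2l // normr_gt0.
by rewrite nuE -rmorphM mulrC divfK // gt_eqF.
Qed.
Definition nr (w : R[i]) := complex.Re w ^+ 2 + complex.Im w ^+ 2.

Lemma nr_ge0 w : 0 <= nr w.
Proof. by rewrite /nr addr_ge0 ?sqr_ge0. Qed.

Lemma disc_nr (w : CC R) : @disc R w <-> nr w < 1.
Proof.
rewrite /disc /= normc_def (_ : (1 : R[i]) = (1:R)%:C)%C // ltcR.
by rewrite -{1}sqrtr1 ltr_sqrt // ltr01.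
Qed.

Lemma nrM (x y : R[i]) : nr (x * y) = nr x * nr y.
Proof. by case: x => a b; case: y => c d; rewrite /nr /=; ring. Qed.

Lemma D_formula (w b : R[i]) :
  2 * (complex.Re w * complex.Re (w * b) + complex.Im w * complex.Im (w * b)) =
  2 * nr w * complex.Re b.
Proof. by case: w => a c; case: b => d e; rewrite /nr /=; ring. Qed.

Lemma eta_dirac_val (z zeta : CC R) : nr zeta = 1 -> @disc R z ->
  let psi := z * zeta / (1 - z * zeta) in psi / (1 + psi) = z * zeta.
Proof.
move=> hz /disc_nr hd psi.
have h1 : 1 - z * zeta != 0.
  apply/eqP => /eqP; rewrite subr_eq0 => /eqP E.
  have : nr (z * zeta) = nr z by rewrite nrM hz mulr1.
  by rewrite -E => E1; move: hd; rewrite -E1 /nr /= expr1n expr0n /= addr0 ltxx.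
rewrite /psi.
have h2 : 1 + z * zeta / (1 - z * zeta) = (1 - z * zeta)^-1.
  by rewrite -{1}(divff h1) -mulrDl subrK div1r.
by rewrite h2 invrK -mulrA mulVf ?mulr1.
Qed.

Lemma normE (x : R[i]) : `|x| = ((complex.Re `|x|)%:C)%C.
Proof. by rewrite normc_def. Qed.

Lemma ReM_real (x : R[i]) (r : R) : complex.Re (x * (r%:C)%C) = complex.Re x * r.
Proof. by case: x => a b /=; rewrite mulr0 subr0. Qed.
Lemma ImM_real (x : R[i]) (r : R) : complex.Im (x * (r%:C)%C) = complex.Im x * r.
Proof. by case: x => a b /=; rewrite mulr0 add0r. Qed.
Lemma divC_real (x : R[i]) (r : R) : x / (r%:C)%C = x * ((r^-1)%:C)%C.
Proof. by rewrite fmorphV. Qed.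

Lemma disc_near (a u : CC R) : @disc R a -> exists2 rho : R, 0 < rho &
  forall s : R, `|s| < rho -> @disc R (a + (s%:C)%C * u).
Proof.
move=> ha; have {}ha : `|a| < 1 := ha.
set na := complex.Re `|a|; set nu := complex.Re `|u|.
have nu0 : 0 <= nu by rewrite /nu normc_def /= sqrtr_ge0.
have na1 : na < 1.
  by move: ha; rewrite /na normc_def (_ : (1:R[i]) = (1:R)%:C)%C // ltcR.
have nu1 : 0 < nu + 1 by lra.
exists ((1 - na) / (nu + 1)).
  by rewrite divr_gt0 // subr_gt0.
move=> s hs.
apply: le_lt_trans (ler_normD _ _) _.
rewrite normrM normC_real [`|a|]normE [`|u|]normE -/na -/nu -rmorphM -rmorphD.
rewrite (_ : (1 : R[i]) = (1:R)%:C)%C // ltcR.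
have hs' : `|s| * (nu + 1) < 1 - na by rewrite -ltr_pdivlMr.
have : `|s| * nu <= `|s| * (nu + 1) by rewrite ler_wpM2l // lerDl.
lra.
Qed.

Lemma Re_dir0 (f : CC R -> CC R) a D (u : CC R) :
  (forall e : R, 0 < e -> exists2 d : R, 0 < d &
    forall h : CC R, h != 0 -> `|h| < (d%:C)%C -> `|(f (a + h) - f a) / h - D| < (e%:C)%C) ->
  (exists2 rho : R, 0 < rho & forall s : R, `|s| < rho -> complex.Re (f (a + (s%:C)%C * u)) = 0) ->
  complex.Re (f a) = 0 ->
  complex.Re (D * u) = 0.
Proof.
move=> HD [rho rho0 Hr] Ha.
apply/eqP; rewrite -normr_eq0 eq_le normr_ge0 andbT.
apply/ler_addgt0Pr => e e0; rewrite add0r.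
have [d d0 Hd] := dir_eps _ _ _ u HD _ e0.
pose s := Num.min d rho / 2.
have s0 : 0 < s by rewrite divr_gt0 // lt_min d0.
have sd : `|s| < Num.min d rho by rewrite gtr0_norm // ltr_pdivrMr // ltr_pMr ?lt_min ?d0 // ltr1n.
move: sd; rewrite lt_min => /andP[sd srho].
have := Hd s (lt0r_neq0 s0) sd.
move=> /(small_parts _ _) [+ _].
rewrite [in X in `|X|]addrC.
have -> : complex.Re (- (D * u) + (f (a + (s%:C)%C * u) - f a) / (s%:C)%C) = - complex.Re (D * u).
  rewrite divC_real.
  have ReD : forall x y : R[i], complex.Re (x + y) = complex.Re x + complex.Re y by move=> [? ?] [? ?].
  have ReN : forall x : R[i], complex.Re (- x) = - complex.Re x by move=> [? ?].
  by rewrite ReD ReN ReM_real ReD ReN Hr // Ha subrr mul0r addr0.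
by rewrite normrN => /ltW.
Qed.

Lemma nonincr (r : R -> R) (c t0 t1 : R) :
 t0 <= t1 -> r t0 < c ->
 (forall t, t0 <= t <= t1 -> r t < c -> forall e, 0 < e ->
    exists2 d, 0 < d & forall h, 0 < h < d -> r (t+h) <= r t + e*h) ->
 (forall t, t0 < t <= t1 -> forall e, 0 < e ->
    exists2 d, 0 < d & forall s, t0 <= s < t -> t - d < s -> r t <= r s + e) ->
 r t1 <= r t0.
Proof.
move=> t01 hc H1 H2.
have [E|lt01] := eqVneq t0 t1; first by rewrite E.
have T : t0 < t1 by rewrite lt_neqAle lt01 t01.
apply/ler_addgt0Pr => e e0.
pose m := Num.min e (c - r t0).
have m0 : 0 < m by rewrite lt_min e0 subr_gt0.
have D0 : 0 < 2 * (t1 - t0) by rewrite mulr_gt0 // subr_gt0.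
pose eps := m / (2 * (t1 - t0)).
have eps0 : 0 < eps by rewrite divr_gt0.
have epsE : eps * (t1 - t0) = m / 2.
  have n0 : t1 - t0 != 0 by rewrite lt0r_neq0 // subr_gt0.
  rewrite /eps invfM -!mulrA mulVf // mulr1 mulrC //.
have mle : m <= e by rewrite ge_min lexx.
have mlc : m <= c - r t0 by rewrite ge_min lexx orbT.
have hc' : r t0 + eps * (t1 - t0) < c by rewrite epsE; lra.
have tt : t0 <= t1 <= t1 by rewrite t01 lexx.
have := @compare r c t0 t1 eps t01 eps0 hc' H1 H2 t1 tt.
rewrite epsE; lra.
Qed.
Lemma mono (F : R -> CC R) (B2 : CC R -> CC R) :
  (forall t, 0 <= t -> has_tderiv F t (F t * B2 (F t))) ->
  (forall w, @disc R w -> complex.Re (B2 w) <= 0) ->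
  forall t0 t1, 0 <= t0 -> t0 <= t1 -> nr (F t0) < 1 -> nr (F t1) <= nr (F t0).
Proof.
move=> HF HB t0 t1 t00 t01 h1.
apply: (@nonincr (rr F) 1 t0 t1) => //.
- move=> t /andP[t0t tt1] ht e e0.
  have t0' : 0 <= t by apply: le_trans t0t.
  have [d d0 Hd] := tderiv_r _ _ _ (HF t t0') e e0.
  exists d => // h /andP[h0 hd].
  have hd' : `|h| < d by rewrite gtr0_norm.
  have := Hd h (lt0r_neq0 h0) (addr_ge0 t0' (ltW h0)) hd'.
  rewrite D_formula (gtr0_norm h0).
  set D := 2 * nr (F t) * complex.Re (B2 (F t)).
  have D0 : D <= 0.
    rewrite /D mulr_ge0_le0 ?mulr_ge0 ?nr_ge0 //; apply: HB; exact/disc_nr.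
  have := mulr_le0_ge0 D0 (ltW h0).
  set X := rr F (t + h) - rr F t - D * h => hD hX.
  have := ler_norm X.
  rewrite /X => hN; lra.
- move=> t /andP[t0t tt1] e e0.
  have t0' : 0 <= t by apply: le_trans (ltW t0t).
  have [d d0 Hd] := tderiv_r _ _ _ (HF t t0') 1 ltr01.
  rewrite D_formula in Hd.
  set D := 2 * nr (F t) * complex.Re (B2 (F t)) in Hd.
  set K := `|D| + 1.
  have K0 : 0 < K by rewrite /K ltr_wpDl.
  exists (Num.min d (e / K)); first by rewrite lt_min d0 divr_gt0.
  move=> s /andP[t0s st] hts.
  have : t - s < Num.min d (e / K) by lra.
  rewrite lt_min => /andP[sd sK].
  have hn : s - t != 0 by rewrite subr_eq0 lt_eqF.
  have E : t + (s - t) = s by rewrite addrC subrK.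
  have hs : 0 <= t + (s - t) by rewrite E (le_trans t00).
  have ha : `|s - t| = t - s by rewrite ltr0_norm ?opprB // subr_lt0.
  have hd' : `|s - t| < d by rewrite ha.
  have := Hd (s - t) hn hs hd'.
  rewrite E ha mul1r.
  have hK : (t - s) * K < e by rewrite -ltr_pdivlMr.
  set X := rr F s - rr F t - D * (s - t) => hX.
  have := ler_norm (- X).
  have := ler_norm (- (D * (s - t))).
  rewrite !normrN normrM ha => hN1 hN2.
  rewrite /X in hN2 hX.
  have : (t - s) * K = `|D| * (t - s) + (t - s) by rewrite /K; ring.
  lra.
Qed.


Lemma nr_gt0 (w : R[i]) : w != 0 -> 0 < nr w.
Proof.
case: w => a b /= hw; rewrite /nr /=.
have sq : forall x : R, x != 0 -> 0 < x ^+ 2.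
  by move=> x x0; rewrite lt_def sqr_ge0 andbT expf_eq0 /= x0.
have [a0|a0] := eqVneq a 0.
  have b0 : b != 0 by apply: contraNneq hw => ->; rewrite a0.
  by rewrite a0 expr0n /= add0r sq.
by rewrite ltr_wpDr ?sqr_ge0 // sq.
Qed.

Lemma ReB2_zero (F : R -> CC R) (B2 : CC R -> CC R) :
  (forall t, 0 <= t -> has_tderiv F t (F t * B2 (F t))) ->
  (forall w, @disc R w -> complex.Re (B2 w) <= 0) ->
  forall z, @disc R z -> z != 0 -> F 0 = z -> nr (F 1) = nr z -> complex.Re (B2 z) = 0.
Proof.
move=> HF HB z hz z0 F0 F1.
apply/eqP; rewrite eq_le HB //= leNgt; apply/negP => hlt.
have r0 := nr_gt0 _ z0.
have r1 : nr z < 1 by apply/disc_nr.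
set b := complex.Re (B2 z) in hlt.
have D0 : 2 * nr z * b < 0 by rewrite pmulr_rlt0 // mulr_gt0.
have e0 : 0 < - (2 * nr z * b) / 2 by rewrite divr_gt0 // oppr_gt0.
have [d d0 Hd] := tderiv_r _ _ _ (HF 0 (lexx 0)) _ e0.
pose h := Num.min (d / 2) 1.
have h0 : 0 < h by rewrite lt_min ltr01 divr_gt0.
have h1 : h <= 1 by rewrite ge_min lexx orbT.
have hd : `|h| < d.
  have hd2 : d / 2 < d by rewrite ltr_pdivrMr // ltr_pMr // ltr1n.
  have hm : h <= d / 2 by rewrite ge_min lexx.
  rewrite gtr0_norm //; exact: le_lt_trans hm hd2.
have hh : 0 <= 0 + h by rewrite add0r ltW.
have := Hd h (lt0r_neq0 h0) hh hd.
rewrite add0r D_formula F0 -/b (gtr0_norm h0).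
set X := rr F h - rr F 0 - _ => hX.
have := le_trans (ler_norm X) hX; rewrite /X /rr F0 -/(nr z) -/(nr (F h)) => hN.
have := mulr_gt0 e0 h0.
have hm : 2 * nr z * b * h < 0 by rewrite pmulr_llt0.
move=> hp.
have Fh : nr (F h) < nr z.
  have : nr (F h) <= nr z + 2 * nr z * b * h + - (2 * nr z * b) / 2 * h  by lra.
  have : - (2 * nr z * b) / 2 * h = - (2 * nr z * b * h) / 2 by rewrite mulrAC mulNr mulNr.
  lra.
have := mono _ _ HF HB h 1 (ltW h0) h1 (lt_trans Fh r1).
rewrite F1; lra.
Qed.

Lemma eta_at (nu : probability (R * R)%type R) (a : R * R) (z : CC R) :
  (forall A, measurable A -> nu A = \d_a A) -> nr (toC a) = 1 -> @disc R z ->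
  etaT nu z = z * toC a.
Proof.
move=> Hnu ha hz.
have Hm : cmeas (fun p => z * toC p / (1 - z * toC p)).
  apply: (cmeas_mul (fun p => z * toC p) (fun p => (1 - z * toC p)^-1)).
    exact: (cmeas_mul (fun _ => z) (@toC R) (cmeas_cst _) cmeas_toC).
  apply: (cmeas_inv (fun p => 1 - z * toC p)).
  apply: (cmeas_add (fun _ => 1) (fun p => - (z * toC p)) (cmeas_cst _)).
  apply: (cmeas_opp (fun p => z * toC p)).
  exact: (cmeas_mul (fun _ => z) (@toC R) (cmeas_cst _) cmeas_toC).
rewrite /etaT /psiT (Cint_dirac nu a _ Hnu Hm).
exact: eta_dirac_val.
Qed.

Lemma Re_cont (f : CC R -> CC R) a D :
  (forall e : R, 0 < e -> exists2 d : R, 0 < d &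
    forall h : CC R, h != 0 -> `|h| < (d%:C)%C -> `|(f (a + h) - f a) / h - D| < (e%:C)%C) ->
  (exists2 rho : R, 0 < rho & forall s : R, s != 0 -> `|s| < rho -> complex.Re (f (a + (s%:C)%C * 1)) = 0) ->
  complex.Re (f a) = 0.
Proof.
move=> HD [rho rho0 Hr].
apply/eqP; rewrite -normr_eq0 eq_le normr_ge0 andbT.
apply/ler_addgt0Pr => e e0; rewrite add0r.
have [d d0 Hd] := dir_eps _ _ _ 1 HD _ ltr01.
set K := `|complex.Re (D * 1)| + 1.
have K0 : 0 < K by rewrite /K ltr_wpDl.
pose s := Num.min d (Num.min rho (e / K)) / 2.
have m0 : 0 < Num.min d (Num.min rho (e / K)) by rewrite !lt_min d0 rho0 divr_gt0.
have s0 : 0 < s by rewrite divr_gt0.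
have sm : s < Num.min d (Num.min rho (e / K)) by rewrite ltr_pdivrMr // ltr_pMr // ltr1n.
move: sm; rewrite !lt_min => /andP[sd /andP[srho sK]].
have as0 : `|s| = s by rewrite gtr0_norm.
have sd' : `|s| < d by rewrite as0.
have := Hd s (lt0r_neq0 s0) sd'.
set q := (f (a + (s%:C)%C * 1) - f a) / (s%:C)%C.
move=> /(small_parts _ _) [hq _].
have ReB : forall x y : R[i], complex.Re (x - y) = complex.Re x - complex.Re y by move=> [? ?] [? ?].
rewrite ReB in hq.
have hq' : `|complex.Re q| <= K.
  have : `|complex.Re q| <= `|complex.Re q - complex.Re (D * 1)| + `|complex.Re (D * 1)|.
    by rewrite -{1}(subrK (complex.Re (D * 1)) (complex.Re q)) ler_normD.
  rewrite /K; lra.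
have Nq : complex.Re (f (a + (s%:C)%C * 1) - f a) = s * complex.Re q.
  have -> : f (a + (s%:C)%C * 1) - f a = (s%:C)%C * q.
    have sC : (s%:C)%C != 0 :> R[i] by apply/eqP => -[] /eqP; rewrite (gt_eqF s0).
    have E : forall x y : R[i], y != 0 -> x = y * (x / y) by move=> x y y0; rewrite mulrCA mulfV // mulr1.
    exact: (E _ _ sC).
  have ReMs : forall (x : R[i]) (r : R), complex.Re ((r%:C)%C * x) = r * complex.Re x by move=> [? ?] r /=; rewrite mul0r subr0.
  exact: ReMs.
rewrite ReB Hr ?(lt0r_neq0 s0) ?as0 // sub0r in Nq.
have : `|complex.Re (f a)| = s * `|complex.Re q|.
  by rewrite -normrN Nq normrM gtr0_norm.
move=> ->.
have : s * `|complex.Re q| <= s * K by rewrite ler_pM2l.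
have : s * K < e by rewrite -ltr_pdivlMr.
lra.
Qed.

Lemma lip0 (B2 : CC R -> CC R) : analytic_on_disc B2 ->
  (forall w, @disc R w -> complex.Re (B2 w) = 0) ->
  forall w, @disc R w -> forall t : R, 0 <= t <= 1 -> forall e : R, 0 < e ->
  exists2 d : R, 0 < d & forall s : R, s != 0 -> `|s| < d ->
    `|complex.Im (B2 (((t + s)%:C)%C * w)) - complex.Im (B2 ((t%:C)%C * w))| <= e * `|s|.
Proof.
move=> Han HR w hw t /andP[t0 t1] e e0.
set a := (t%:C)%C * w.
have ha : @disc R a.
  apply/disc_nr; rewrite /a nrM.
  have -> : nr (t%:C)%C = t ^+ 2 by rewrite /nr /= expr0n /= addr0.
  have := (proj1 (disc_nr w) hw); have := nr_ge0 w.
  have : t ^+ 2 <= 1 by rewrite -(expr1n _ 2) lerXn2r ?nnegrE.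
  nra.
have [D HD] := deriv_eps B2 a (Han a ha).
have near_u : forall u : CC R, exists2 rho : R, 0 < rho &
    forall s : R, `|s| < rho -> complex.Re (B2 (a + (s%:C)%C * u)) = 0.
  move=> u; have [rho rho0 Hr] := disc_near a u ha.
  by exists rho => // s hs; apply: HR; apply: Hr.
have Rw := Re_dir0 B2 a D w HD (near_u w) (HR a ha).
have Riw := Re_dir0 B2 a D ('i%C * w) HD (near_u _) (HR a ha).
have Dw : D * w = 0.
  move: Riw Rw; rewrite mulrCA.
  by case: (D * w) => x y /=; rewrite mul0r mul1r sub0r => /eqP; rewrite oppr_eq0 => /eqP -> ->.
have [d d0 Hd] := dir_eps B2 a D w HD e e0.
exists d => // s s0 sd.
have := Hd s s0 sd.
rewrite Dw subr0 => /(small_parts _ _) [_].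
rewrite divC_real ImM_real.
have ImB : forall x y : R[i], complex.Im (x - y) = complex.Im x - complex.Im y by move=> [? ?] [? ?].
rewrite ImB /a -mulrDl -rmorphD normrM normrV ?unitfE //.
rewrite ltr_pdivrMr ?normr_gt0 // => h; exact: ltW.
Qed.

Lemma lip_nonincr (r : R -> R) :
  (forall t : R, 0 <= t <= 1 -> forall e : R, 0 < e ->
    exists2 d : R, 0 < d & forall s : R, s != 0 -> `|s| < d -> `|r (t + s) - r t| <= e * `|s|) ->
  r 1 <= r 0.
Proof.
move=> L.
apply: (@nonincr r (`|r 0| + 1) 0 1) => //.
- by have := ler_norm (r 0); lra.
- move=> t ht _ e e0.
  have [d d0 Hd] := L t ht e e0.
  exists d => // h /andP[h0 hd].
  have hd' : `|h| < d by rewrite gtr0_norm.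
  have := Hd h (lt0r_neq0 h0) hd'.
  rewrite (gtr0_norm h0) => H.
  have := ler_norm (r (t + h) - r t); lra.
- move=> t /andP[t0 t1] e e0.
  have ht : 0 <= t <= 1 by rewrite ltW.
  have [d d0 Hd] := L t ht 1 ltr01.
  exists (Num.min d e); first by rewrite lt_min d0.
  move=> s /andP[s0 st] hts.
  have : t - s < Num.min d e by lra.
  rewrite lt_min => /andP[sd se].
  have hn : s - t != 0 by rewrite subr_eq0 lt_eqF.
  have ha : `|s - t| = t - s by rewrite ltr0_norm ?opprB // subr_lt0.
  have hd' : `|s - t| < d by rewrite ha.
  have := Hd (s - t) hn hd'.
  have E : t + (s - t) = s by rewrite addrC subrK.
  rewrite E ha mul1r => H.
  have := ler_norm (- (r s - r t)); rewrite normrN; lra.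
Qed.

Lemma Im_const (B2 : CC R -> CC R) : analytic_on_disc B2 ->
  (forall w, @disc R w -> complex.Re (B2 w) = 0) ->
  forall w, @disc R w -> complex.Im (B2 w) = complex.Im (B2 0).
Proof.
move=> Han HR w hw.
pose psi (t : R) := complex.Im (B2 ((t%:C)%C * w)).
have L := lip0 B2 Han HR w hw.
have p1 : psi 1 = complex.Im (B2 w) by rewrite /psi mul1r.
have p0 : psi 0 = complex.Im (B2 0) by rewrite /psi mul0r.
rewrite -p1 -p0.
apply/eqP; rewrite eq_le; apply/andP; split.
  by apply: lip_nonincr => t ht e e0; exact: L.
have := @lip_nonincr (fun t => - psi t).
rewrite lerN2; apply => t ht e e0.
have [d d0 Hd] := L t ht e e0.
by exists d => // s s0 sd; rewrite -opprD normrN; exact: Hd.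
Qed.
End All.

Arguments nr {R}.
Theorem proposition5p5 (R : realType) (nu : R -> probability (R * R)%type R)
    (alpha : R) (B2 : CC R -> CC R) :
  mm_semigroup nu ->
  (forall A : set (R * R), measurable A -> nu 0 A = \d_((1, 0) : R * R) A) ->
  (forall A : set (R * R), measurable A ->
     nu 1 A = \d_((cos alpha, sin alpha) : R * R) A) ->
  analytic_on_disc B2 ->
  (forall z, @disc R z -> complex.Re (B2 z) <= 0) ->
  (forall (t : R) (z : CC R), 0 <= t -> @disc R z ->
     has_tderiv (fun s => etaT (nu s) z) t (etaT (nu t) z * B2 (etaT (nu t) z))) ->
  exists c : R, forall z, @disc R z -> B2 z = Complex 0 c.
Proof.
move=> _ H0 H1 Han HB HF.
have ReAll : forall w, @disc R w -> complex.Re (B2 w) = 0.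
  have Rnz : forall w, @disc R w -> w != 0 -> complex.Re (B2 w) = 0.
    move=> w hw w0.
    pose F := fun s => etaT (nu s) w.
    have HF' : forall t, 0 <= t -> has_tderiv F t (F t * B2 (F t)).
      by move=> t t0; exact: HF.
    have F0 : F 0 = w.
      rewrite /F (eta_at _ _ _ _ H0) //; last by rewrite /nr /= expr1n expr0n /= addr0.
      by rewrite /toC /= mulr1.
    have F1 : nr (F 1) = nr w.
      rewrite /F (eta_at _ _ _ _ H1) //; last by rewrite /nr /= cos2Dsin2.
      by rewrite nrM /nr /= cos2Dsin2 mulr1.
    exact: (ReB2_zero _ F B2 HF' HB w hw w0 F0 F1).
  move=> w hw.
  have [E|w0] := eqVneq w 0; last exact: Rnz.
  subst w.
  have [D HD] := deriv_eps _ B2 0 (Han 0 hw).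
  apply: (Re_cont _ B2 0 D HD).
  exists 1 => // s s0 hs.
  rewrite add0r mulr1; apply: Rnz.
    by apply/disc_nr; rewrite /nr /= expr0n /= addr0 -real_normK ?num_real // expr_lt1.
  by apply/eqP => -[] /eqP; rewrite (negbTE s0).
exists (complex.Im (B2 0)) => z hz.
rewrite -(Im_const _ B2 Han ReAll z hz) -(ReAll z hz).
by case: (B2 z).
Qed.
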